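(* For every integer $n\geqslant1$, \[ \sum_{k=0}^{n-1}(-1)^{n+k}\frac{(2n+1)(2k+1)}{(n-k)^{2}(n+k+1)^{2}} =-\frac{\pi^{2}}{12}+\psi_{1}(2n+1)-\frac{1}{2}\psi_{1}(n+1). \]
   Context: $\psi_1$ is the trigamma function, $\psi_1(z)=\frac{\mathrm{d}^2}{\mathrm{d}z^2}\ln\Gamma(z)$. *)

(* Defs.v *)
From Stdlib Require Import Reals.
From Coquelicot Require Import Coquelicot.
Open Scope R_scope.

Definition Gamma (x : R) : R :=
  RInt_gen (fun t => Rpower t (x - 1) * exp (- t))
           (at_right 0) (Rbar_locally p_infty).

Definition trigamma (z : R) : R :=
  Derive_n (fun y => ln (Gamma y)) 2 z.

(* Main.v *)
Require Import Defs.
From Stdlib Require Import Reals Lra Lia.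
From Coquelicot Require Import Coquelicot.
Open Scope R_scope.

Fixpoint Qs (m : nat) : R := match m with O => 0 | S p => Qs p + / (INR p + 1) ^ 2 end.
Fixpoint Alt (m : nat) : R := match m with O => 0 | S p => Alt p + (-1) ^ (S p) / (INR p + 1) ^ 2 end.

Lemma Alt_S p : Alt (S p) = Alt p + (-1) ^ (S p) / (INR p + 1) ^ 2. Proof. reflexivity. Qed.
Lemma Qs_S p : Qs (S p) = Qs p + / (INR p + 1) ^ 2. Proof. reflexivity. Qed.

Lemma Alt_Qs (n : nat) : Alt (2 * n) = - Qs (2 * n) + / 2 * Qs n.
Proof.
  induction n as [|n IH]; [simpl; lra|].
  replace (2 * S n)%nat with (S (S (2 * n))) by lia.
  rewrite !Alt_S, !Qs_S, IH.
  replace ((-1) ^ S (S (2 * n))) with 1.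
  2:{ replace (S (S (2 * n))) with (2 * S n)%nat by lia. rewrite pow_1_even. reflexivity. }
  replace ((-1) ^ S (2 * n)) with (-1).
  2:{ rewrite <- tech_pow_Rmult, pow_1_even. ring. }
  rewrite !S_INR, mult_INR. simpl (INR 2).
  assert (0 <= INR n) by apply pos_INR.
  field; lra.
Qed.

Lemma sum_rev (f : nat -> R) (n : nat) :
  sum_f_R0 (fun k => f (n - k)%nat) n = sum_f_R0 f n.
Proof.
  induction n as [|n IH]; [reflexivity|].
  rewrite decomp_sum by lia. simpl pred.
  replace (S n - 0)%nat with (S n) by lia.
  rewrite (sum_eq _ (fun k => f (n - k)%nat)).
  2:{ intros i Hi. reflexivity. }
  rewrite IH. simpl. ring.
Qed.

Lemma Alt_sum (m : nat) : Alt (S m) = sum_f_R0 (fun i => (-1) ^ (S i) / (INR i + 1) ^ 2) m.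
Proof. induction m as [|m IH]; [simpl; ring|]. rewrite Alt_S, IH. reflexivity. Qed.

Lemma T2 (p r : nat) :
  sum_f_R0 (fun k => (-1) ^ (p + k + 2) / (INR (p + 1) + INR k + 1) ^ 2) r = Alt (p + 2 + r) - Alt (p + 1).
Proof.
  induction r as [|r IH].
  - replace (p + 2 + 0)%nat with (S (p + 1)) by lia. simpl sum_f_R0. rewrite Alt_S.
    replace (p + 0 + 2)%nat with (S (p+1)) by lia.
    simpl (INR 0). rewrite Rplus_0_r. assert (0 <= INR (p+1)) by apply pos_INR. field; lra.
  - rewrite tech5, IH.
    replace (p + 2 + S r)%nat with (S (p + 2 + r)) by lia. rewrite Alt_S.
    replace (S (p + 2 + r)) with (p + S r + 2)%nat by lia.
    replace (INR (p + 2 + r) + 1) with (INR (p + 1) + INR (S r) + 1).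
    2:{ rewrite !plus_INR, !S_INR. simpl. ring. }
    ring.
Qed.

Lemma finite_part (n : nat) (hn : (1 <= n)%nat) :
  sum_f_R0 (fun k : nat =>
      (-1) ^ (n + k) * ((2 * INR n + 1) * (2 * INR k + 1))
      / ((INR n - INR k) ^ 2 * (INR n + INR k + 1) ^ 2)) (n - 1)
  = - Qs (2 * n) + / 2 * Qs n.
Proof.
  rewrite <- Alt_Qs.
  destruct n as [|p]; [lia|]. replace (S p - 1)%nat with p by lia.
  rewrite (sum_eq _ (fun k => (-1) ^ (S (p - k)) / (INR (p - k) + 1) ^ 2
                 + (-1) ^ (p + k + 2) / (INR (p + 1) + INR k + 1) ^ 2)).
  2:{ intros k Hk.
      assert (E1 : (-1) ^ (S p + k) = (-1) ^ S (p - k)).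
      { replace (S p + k)%nat with (S (p - k) + 2 * k)%nat by lia.
        rewrite pow_add, pow_1_even. ring. }
      assert (E2 : (-1) ^ (p + k + 2) = - (-1) ^ S (p - k)).
      { replace (p + k + 2)%nat with (S (S (p - k) + 2 * k))%nat by lia.
        rewrite <- tech_pow_Rmult, pow_add, pow_1_even. ring. }
      rewrite E1, E2. rewrite minus_INR by lia.
      replace (INR (p+1)) with (INR (S p)) by (f_equal; lia).
      rewrite S_INR.
      assert (0 <= INR k) by apply pos_INR.
      assert (INR k <= INR p) by (apply le_INR; lia).
      field. split; lra. }
  rewrite sum_plus.
  rewrite (sum_rev (fun i => (-1) ^ S i / (INR i + 1) ^ 2)).
  rewrite <- Alt_sum. rewrite T2.
  replace (2 * S p)%nat with (p + 2 + p)%nat by lia.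
  replace (p + 1)%nat with (S p) by lia. ring.
Qed.

Lemma sc1 x : sin x ^ 2 + cos x ^ 2 - 1 = 0.
Proof. pose proof (sin2 x). unfold Rsqr in H. nra. Qed.

Lemma der1 (m : nat) (x : R) :
  is_derive (fun x => sin x * cos x ^ (2 * m + 1)) x
    ((2 * INR m + 2) * cos x ^ (2 * m + 2) - (2 * INR m + 1) * cos x ^ (2 * m)).
Proof.
  auto_derive; [exact I|].
  replace (m + (m + 0) + 1)%nat with (2 * m + 1)%nat by lia.
  replace (Init.Nat.pred (2 * m + 1)) with (2 * m)%nat by lia.
  rewrite !pow_add, plus_INR, mult_INR. simpl INR.
  set (C := cos x ^ (2 * m)).
  pose proof (sc1 x) as H.
  assert (H2 : (sin x ^ 2 + cos x ^ 2 - 1) * ((2 * INR m + 1) * C) = 0) by (rewrite H; ring).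
  lra.
Qed.

Lemma der2 (m : nat) (x : R) :
  is_derive (fun x => x * cos x ^ (2 * m + 2) + (INR m + 1) * (x ^ 2 * sin x * cos x ^ (2 * m + 1))) x
    (cos x ^ (2 * m + 2) + 2 * (INR m + 1) ^ 2 * (x ^ 2 * cos x ^ (2 * m + 2))
      - (INR m + 1) * (2 * INR m + 1) * (x ^ 2 * cos x ^ (2 * m))).
Proof.
  auto_derive; [exact I|].
  replace (m + (m + 0) + 1)%nat with (2 * m + 1)%nat by lia.
  replace (m + (m + 0) + 2)%nat with (2 * m + 2)%nat by lia.
  replace (Init.Nat.pred (2 * m + 1)) with (2 * m)%nat by lia.
  replace (Init.Nat.pred (2 * m + 2)) with (2 * m + 1)%nat by lia.
  rewrite !pow_add, !plus_INR, !mult_INR. simpl INR.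
  set (C := cos x ^ (2 * m)).
  pose proof (sc1 x) as H.
  assert (H2 : (sin x ^ 2 + cos x ^ 2 - 1) * ((INR m + 1) * (2 * INR m + 1) * x ^ 2 * C) = 0) by (rewrite H; ring).
  lra.
Qed.

Definition cA (n : nat) : R := RInt (fun x => cos x ^ (2 * n)) 0 (PI / 2).
Definition cB (n : nat) : R := RInt (fun x => x ^ 2 * cos x ^ (2 * n)) 0 (PI / 2).

Lemma cont_cos_pow k x : continuous (fun x => cos x ^ k) x.
Proof. apply (ex_derive_continuous (K := R_AbsRing) (V := R_NormedModule)). auto_derive. exact I. Qed.
Lemma cont_x2_cos_pow k x : continuous (fun x => x ^ 2 * cos x ^ k) x.
Proof. apply (ex_derive_continuous (K := R_AbsRing) (V := R_NormedModule)). auto_derive. exact I. Qed.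

Lemma cA_is n : is_RInt (fun x => cos x ^ (2 * n)) 0 (PI / 2) (cA n).
Proof. unfold cA, cB. apply (RInt_correct (V := R_CompleteNormedModule)), (ex_RInt_continuous (V := R_CompleteNormedModule)). intros; apply cont_cos_pow. Qed.
Lemma cB_is n : is_RInt (fun x => x ^ 2 * cos x ^ (2 * n)) 0 (PI / 2) (cB n).
Proof. unfold cA, cB. apply (RInt_correct (V := R_CompleteNormedModule)), (ex_RInt_continuous (V := R_CompleteNormedModule)). intros; apply cont_x2_cos_pow. Qed.

Lemma cos_PI2_pow k : cos (PI / 2) ^ (S k) = 0.
Proof. rewrite cos_PI2. simpl. ring. Qed.

Lemma cA_rec m : (2 * INR m + 2) * cA (S m) = (2 * INR m + 1) * cA m.
Proof.
  assert (H := is_RInt_derive (fun x => sin x * cos x ^ (2 * m + 1))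
    (fun x => (2 * INR m + 2) * cos x ^ (2 * m + 2) - (2 * INR m + 1) * cos x ^ (2 * m)) 0 (PI / 2)).
  specialize (H (fun x _ => der1 m x)).
  assert (Hc : forall x, Rmin 0 (PI/2) <= x <= Rmax 0 (PI/2) -> continuous
    (fun x => (2 * INR m + 2) * cos x ^ (2 * m + 2) - (2 * INR m + 1) * cos x ^ (2 * m)) x).
  { intros x _. apply (ex_derive_continuous (K := R_AbsRing) (V := R_NormedModule)). auto_derive. exact I. }
  specialize (H Hc). clear Hc.
  assert (H' : is_RInt (fun x => (2 * INR m + 2) * cos x ^ (2 * m + 2) - (2 * INR m + 1) * cos x ^ (2 * m)) 0 (PI / 2)
     ((2 * INR m + 2) * cA (S m) - (2 * INR m + 1) * cA m)).
  { apply (is_RInt_minus (fun x => (2 * INR m + 2) * cos x ^ (2 * m + 2)) (fun x => (2 * INR m + 1) * cos x ^ (2 * m))).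
    - apply (is_RInt_scal (fun x => cos x ^ (2 * m + 2))).
      replace (2 * m + 2)%nat with (2 * S m)%nat by lia. apply cA_is.
    - apply (is_RInt_scal (fun x => cos x ^ (2 * m))). apply cA_is. }
  apply (is_RInt_unique (V := R_CompleteNormedModule)) in H. apply (is_RInt_unique (V := R_CompleteNormedModule)) in H'. rewrite H in H'.
  rewrite cos_PI2, sin_0 in H'. rewrite !pow_i in H' by lia.
  unfold minus, plus, opp in H'; simpl in H'. lra.
Qed.

Lemma cB_rel m : cA (S m) + 2 * (INR m + 1) ^ 2 * cB (S m) - (INR m + 1) * (2 * INR m + 1) * cB m = 0.
Proof.
  assert (H := is_RInt_derive (fun x => x * cos x ^ (2 * m + 2) + (INR m + 1) * (x ^ 2 * sin x * cos x ^ (2 * m + 1)))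
    (fun x => cos x ^ (2 * m + 2) + 2 * (INR m + 1) ^ 2 * (x ^ 2 * cos x ^ (2 * m + 2))
      - (INR m + 1) * (2 * INR m + 1) * (x ^ 2 * cos x ^ (2 * m))) 0 (PI / 2)).
  specialize (H (fun x _ => der2 m x)).
  assert (Hc : forall x, Rmin 0 (PI/2) <= x <= Rmax 0 (PI/2) -> continuous
    (fun x => cos x ^ (2 * m + 2) + 2 * (INR m + 1) ^ 2 * (x ^ 2 * cos x ^ (2 * m + 2))
      - (INR m + 1) * (2 * INR m + 1) * (x ^ 2 * cos x ^ (2 * m))) x).
  { intros x _. apply (ex_derive_continuous (K := R_AbsRing) (V := R_NormedModule)). auto_derive. exact I. }
  specialize (H Hc). clear Hc.
  assert (H' : is_RInt (fun x => cos x ^ (2 * m + 2) + 2 * (INR m + 1) ^ 2 * (x ^ 2 * cos x ^ (2 * m + 2))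
      - (INR m + 1) * (2 * INR m + 1) * (x ^ 2 * cos x ^ (2 * m))) 0 (PI / 2)
     (cA (S m) + 2 * (INR m + 1) ^ 2 * cB (S m) - (INR m + 1) * (2 * INR m + 1) * cB m)).
  { apply (is_RInt_minus (fun x => cos x ^ (2 * m + 2) + 2 * (INR m + 1) ^ 2 * (x ^ 2 * cos x ^ (2 * m + 2)))
       (fun x => (INR m + 1) * (2 * INR m + 1) * (x ^ 2 * cos x ^ (2 * m)))).
    - apply (is_RInt_plus (fun x => cos x ^ (2 * m + 2)) (fun x => 2 * (INR m + 1) ^ 2 * (x ^ 2 * cos x ^ (2 * m + 2)))).
      + replace (2 * m + 2)%nat with (2 * S m)%nat by lia. apply cA_is.
      + apply (is_RInt_scal (fun x => x ^ 2 * cos x ^ (2 * m + 2))).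
        replace (2 * m + 2)%nat with (2 * S m)%nat by lia. apply cB_is.
    - apply (is_RInt_scal (fun x => x ^ 2 * cos x ^ (2 * m))). apply cB_is. }
  apply (is_RInt_unique (V := R_CompleteNormedModule)) in H. apply (is_RInt_unique (V := R_CompleteNormedModule)) in H'. rewrite H in H'.
  rewrite cos_PI2, sin_0 in H'. rewrite !pow_i in H' by lia.
  unfold minus, plus, opp in H'; simpl in H'. lra.
Qed.

Lemma cA0 : cA 0 = PI / 2.
Proof.
  unfold cA. simpl pow.
  assert (H := is_RInt_derive (fun x => x) (fun _ => 1) 0 (PI / 2)).
  apply (is_RInt_unique (V := R_CompleteNormedModule)).
  replace (PI / 2) with (minus (PI / 2) 0) at 2 by (unfold minus, plus, opp; simpl; ring).
  apply H.
  - intros x _. auto_derive; auto.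
  - intros x _. apply continuous_const.
Qed.

Lemma cB0 : cB 0 = (PI / 2) ^ 3 / 3.
Proof.
  unfold cB.
  assert (H := is_RInt_derive (fun x => x ^ 3 / 3) (fun x => x ^ 2 * cos x ^ (2 * 0)) 0 (PI / 2)).
  apply (is_RInt_unique (V := R_CompleteNormedModule)).
  replace ((PI / 2) ^ 3 / 3) with (minus ((PI / 2) ^ 3 / 3) (0 ^ 3 / 3)) by (unfold minus, plus, opp; simpl; field).
  apply H.
  - intros x _. auto_derive; auto. simpl. field.
  - intros x _. apply cont_x2_cos_pow.
Qed.

Lemma cA_pos n : 0 < cA n.
Proof.
  induction n as [|m IH].
  - rewrite cA0. pose proof PI_RGT_0. lra.
  - pose proof (cA_rec m). assert (0 <= INR m) by apply pos_INR.
    apply (Rmult_lt_reg_l (2 * INR m + 2)); [lra|]. rewrite H. rewrite Rmult_0_r.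
    apply Rmult_lt_0_compat; lra.
Qed.

Lemma sin_lb_bound x : 0 <= x <= 2 -> x / 3 <= sin_lb x.
Proof.
  intros Hx. unfold sin_lb, sin_approx. cbn [sum_f_R0]. unfold sin_term.
  change (INR (Factorial.fact (2*0+1))) with 1. change (INR (Factorial.fact (2*1+1))) with (INR 6).
  change (INR (Factorial.fact (2*2+1))) with (INR 120). change (INR (Factorial.fact (2*3+1))) with (INR 5040).
  rewrite !INR_IZR_INZ. change (Z.of_nat 6) with 6%Z. change (Z.of_nat 120) with 120%Z.
  change (Z.of_nat 5040) with 5040%Z.
  change (2*0+1)%nat with 1%nat. change (2*1+1)%nat with 3%nat. change (2*2+1)%nat with 5%nat. change (2*3+1)%nat with 7%nat.
  assert (0 <= x ^ 2 <= 4) by nra.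
  assert (x ^ 7 / 5040 <= x ^ 5 / 120).
  { replace (x ^ 7) with (x ^ 5 * x ^ 2) by ring. assert (0 <= x ^ 5) by (apply pow_le; lra). nra. }
  assert (x ^ 3 / 6 <= 2 * x / 3).
  { replace (x ^ 3) with (x * x ^ 2) by ring. nra. }
  simpl pow in *. lra.
Qed.

Lemma x2_le_sin x : 0 <= x <= PI / 2 -> x ^ 2 <= 9 * sin x ^ 2.
Proof.
  intros Hx. pose proof PI_4. pose proof PI_RGT_0.
  destruct (SIN x) as [H1 _]; try lra.
  pose proof (sin_lb_bound x ltac:(lra)). nra.
Qed.

Lemma cB_bounds n : 0 <= cB n <= 9 * (cA n - cA (S n)).
Proof.
  pose proof PI_RGT_0.
  assert (Hex : ex_RInt (fun x => x ^ 2 * cos x ^ (2 * n)) 0 (PI / 2)) by (eexists; apply cB_is).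
  split.
  - unfold cB. apply RInt_ge_0; [lra| exact Hex |].
    intros x _. apply Rmult_le_pos; [apply pow2_ge_0|]. replace (2 * n)%nat with (n * 2)%nat by lia.
    rewrite pow_mult. apply pow2_ge_0.
  - assert (H9 : is_RInt (fun x => 9 * (cos x ^ (2 * n) - cos x ^ (2 * S n))) 0 (PI / 2) (9 * (cA n - cA (S n)))).
    { apply (is_RInt_scal (fun x => cos x ^ (2 * n) - cos x ^ (2 * S n))).
      apply (is_RInt_minus (fun x => cos x ^ (2 * n)) (fun x => cos x ^ (2 * S n))); apply cA_is. }
    rewrite <- (is_RInt_unique (V := R_CompleteNormedModule) _ _ _ _ H9).
    unfold cB. apply RInt_le; [lra | exact Hex | eexists; exact H9 |].
    intros x Hx.
    replace (cos x ^ (2 * n) - cos x ^ (2 * S n)) with (sin x ^ 2 * cos x ^ (2 * n)).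
    2:{ replace (2 * S n)%nat with (2 * n + 2)%nat by lia. rewrite pow_add. pose proof (sc1 x). 
        assert (H3 : (sin x ^ 2 + cos x ^ 2 - 1) * cos x ^ (2 * n) = 0) by (rewrite H0; ring). lra. }
    assert (0 <= cos x ^ (2 * n)).
    { replace (2 * n)%nat with (n * 2)%nat by lia. rewrite pow_mult. apply pow2_ge_0. }
    pose proof (x2_le_sin x ltac:(lra)). nra.
Qed.

Definition rr n : R := cB n / cA n.

Lemma rr_step m : / (INR m + 1) ^ 2 = 2 * (rr m - rr (S m)).
Proof.
  unfold rr. pose proof (cA_rec m). pose proof (cB_rel m). pose proof (cA_pos m). pose proof (cA_pos (S m)).
  assert (0 <= INR m) by apply pos_INR.
  assert (E : cA (S m) = (2 * INR m + 1) / (2 * INR m + 2) * cA m).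
  { apply (Rmult_eq_reg_l (2 * INR m + 2)); [|lra]. rewrite H. field. lra. }
  assert (EB : cB (S m) = ((INR m + 1) * (2 * INR m + 1) * cB m - cA (S m)) / (2 * (INR m + 1) ^ 2)).
  { apply (Rmult_eq_reg_l (2 * (INR m + 1) ^ 2)); [|nra]. field_simplify; [|nra]. lra. }
  rewrite EB. rewrite E. field. repeat split; try lra.
Qed.

Lemma Qs_rr N : Qs N = PI ^ 2 / 6 - 2 * rr N.
Proof.
  induction N as [|N IH].
  - unfold rr. rewrite cA0, cB0. simpl Qs. pose proof PI_RGT_0. field. lra.
  - rewrite Qs_S, IH, rr_step. ring.
Qed.

Lemma lim_inv_S : is_lim_seq (fun n => / (INR n + 1)) 0.
Proof.
  assert (H : is_lim_seq (fun n => INR (S n)) p_infty) by (apply -> is_lim_seq_incr_1; apply is_lim_seq_INR).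
  apply is_lim_seq_inv in H; [|discriminate].
  eapply is_lim_seq_ext; [|exact H]. intros n. cbv beta. rewrite S_INR. reflexivity.
Qed.

Lemma basel : is_lim_seq Qs (PI ^ 2 / 6).
Proof.
  apply is_lim_seq_le_le with (u := fun n => PI ^ 2 / 6 - 9 * / (INR n + 1)) (w := fun _ => PI ^ 2 / 6).
  - intros n. rewrite Qs_rr. unfold rr.
    pose proof (cB_bounds n). pose proof (cA_pos n). pose proof (cA_rec n).
    assert (0 <= INR n) by apply pos_INR.
    assert (0 <= cB n / cA n) by (apply Rdiv_le_0_compat; lra).
    assert (cB n / cA n <= 9 * / (2 * INR n + 2)).
    { apply (Rmult_le_reg_r (cA n)); [lra|]. unfold Rdiv. rewrite Rmult_assoc, Rinv_l, Rmult_1_r by lra.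
      assert (E : cA (S n) = (2 * INR n + 1) / (2 * INR n + 2) * cA n).
      { apply (Rmult_eq_reg_l (2 * INR n + 2)); [|lra]. rewrite H1. field. lra. }
      replace (9 * / (2 * INR n + 2) * cA n) with (9 * (cA n - cA (S n))) by (rewrite E; field; lra). lra. }
    split; [|lra].
    assert (9 * / (2 * INR n + 2) <= 9 * / (INR n + 1) / 2) by (right; field; lra). lra.
  - assert (H : is_lim_seq (fun n => PI ^ 2 / 6 - 9 * / (INR n + 1)) (PI ^ 2 / 6 - 9 * 0)).
    2:{ rewrite Rmult_0_r, Rminus_0_r in H. exact H. }
    apply (is_lim_seq_minus _ _ (PI ^ 2 / 6) (9 * 0) (PI ^ 2 / 6 - 9 * 0)).
    + apply is_lim_seq_const.
    + apply (is_lim_seq_scal_l _ 9 0). apply lim_inv_S.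
    + reflexivity.
  - apply is_lim_seq_const.
Qed.

Definition Pw (b t : R) : R := if Rlt_dec 0 t then Rpower t b else 0.

Lemma Pw_pos b t : 0 < t -> Pw b t = Rpower t b.
Proof. intros H. unfold Pw. destruct (Rlt_dec 0 t); [reflexivity|lra]. Qed.
Lemma Pw_npos b t : t <= 0 -> Pw b t = 0.
Proof. intros H. unfold Pw. destruct (Rlt_dec 0 t); [lra|reflexivity]. Qed.
Lemma Pw_ge0 b t : 0 <= Pw b t.
Proof. unfold Pw. destruct (Rlt_dec 0 t); [unfold Rpower; left; apply exp_pos|lra]. Qed.
Lemma Pw_add a b t : Pw (a + b) t = Pw a t * Pw b t.
Proof. unfold Pw. destruct (Rlt_dec 0 t); [apply Rpower_plus|ring]. Qed.
Lemma Pw_one b : Pw b 1 = 1.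
Proof. rewrite Pw_pos by lra. unfold Rpower. rewrite ln_1, Rmult_0_r, exp_0. reflexivity. Qed.
Lemma Pw_two t : 0 <= t -> Pw 2 t = t ^ 2.
Proof.
  intros H. destruct (Req_dec t 0) as [->|Hn].
  - rewrite Pw_npos by lra. ring.
  - rewrite Pw_pos by lra. replace 2 with (INR 2) by reflexivity. apply Rpower_pow. lra.
Qed.
Lemma Pw_le1 b t : 0 < b -> t <= 1 -> Pw b t <= 1.
Proof.
  intros Hb Ht. unfold Pw. destruct (Rlt_dec 0 t); [|lra].
  unfold Rpower. rewrite <- exp_0. 
  destruct (Req_dec t 1) as [->|Hne]; [rewrite ln_1, Rmult_0_r; lra|].
  left. apply exp_increasing. assert (ln t < 0). { rewrite <- ln_1. apply ln_increasing; lra. }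
  nra.
Qed.

Lemma small_pow b eps : 0 < b -> 0 < eps -> exists d, 0 < d /\ forall t, 0 < t < d -> Rpower t b < eps.
Proof.
  intros Hb He. exists (exp (ln eps / b)). split; [apply exp_pos|].
  intros t [Ht1 Ht2]. unfold Rpower. rewrite <- (exp_ln eps He).
  apply exp_increasing. 
  assert (ln t < ln eps / b).
  { rewrite <- (ln_exp (ln eps / b)). apply ln_increasing; lra. }
  apply (Rmult_lt_compat_l b) in H; [|lra]. 
  replace (b * (ln eps / b)) with (ln eps) in H by (field; lra). lra.
Qed.

Lemma Pw_cont b t : 0 < b -> continuous (Pw b) t.
Proof.
  intros Hb.
  destruct (Rlt_le_dec 0 t) as [Ht|Ht].
  - apply (continuous_ext_loc _ (fun y => Rpower y b)).
    + exists (mkposreal t Ht). intros y Hy. symmetry. apply Pw_pos.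
      unfold ball in Hy; simpl in Hy; unfold AbsRing_ball, abs, minus, plus, opp in Hy; simpl in Hy.
      apply Rabs_def2 in Hy. simpl in Hy. lra.
    + apply (ex_derive_continuous (K := R_AbsRing) (V := R_NormedModule)).
      exists (b * Rpower t (b - 1)). apply is_derive_Reals. apply derivable_pt_lim_power. exact Ht.
  - apply continuity_pt_filterlim. unfold continuity_pt, continue_in, limit1_in, limit_in. intros eps Heps.
    destruct (small_pow b eps Hb Heps) as [d [Hd Hd']].
    exists d. split; [lra|]. intros y [_ Hy]. simpl in Hy.
    unfold R_dist in Hy. apply Rabs_def2 in Hy. simpl. 
    rewrite (Pw_npos b t Ht). unfold R_dist. rewrite Rminus_0_r.
    unfold Pw. destruct (Rlt_dec 0 y).
    + rewrite Rabs_pos_eq by (unfold Rpower; left; apply exp_pos). apply Hd'. lra.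
    + rewrite Rabs_R0. exact Heps.
Qed.

Lemma Pw_der b t : 1 < b -> is_derive (Pw b) t (b * Pw (b - 1) t).
Proof.
  intros Hb.
  destruct (Rlt_le_dec 0 t) as [Ht|Ht].
  - rewrite (Pw_pos (b - 1)) by exact Ht.
    apply (is_derive_ext_loc (fun y => Rpower y b)).
    + exists (mkposreal t Ht). intros y Hy. symmetry. apply Pw_pos.
      unfold ball in Hy; simpl in Hy; unfold AbsRing_ball, abs, minus, plus, opp in Hy; simpl in Hy.
      apply Rabs_def2 in Hy. simpl in Hy. lra.
    + apply is_derive_Reals. apply derivable_pt_lim_power. exact Ht.
  - destruct Ht as [Ht|Ht].
    + rewrite (Pw_npos (b - 1)) by lra. rewrite Rmult_0_r.
      apply (is_derive_ext_loc (fun _ => 0)).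
      * exists (mkposreal (- t) ltac:(lra)). intros y Hy. symmetry. apply Pw_npos.
        unfold ball in Hy; simpl in Hy; unfold AbsRing_ball, abs, minus, plus, opp in Hy; simpl in Hy.
        apply Rabs_def2 in Hy. simpl in Hy. lra.
      * auto_derive; auto.
    + subst t. rewrite (Pw_npos (b - 1)) by lra. rewrite Rmult_0_r.
      apply is_derive_Reals. intros eps Heps.
      destruct (small_pow (b - 1) eps ltac:(lra) Heps) as [d [Hd Hd']].
      exists (mkposreal d Hd). intros h Hh0 Hh. simpl in Hh.
      rewrite Rplus_0_l, (Pw_npos b 0) by lra. rewrite Rminus_0_r, Rminus_0_r.
      unfold Pw. destruct (Rlt_dec 0 h).
      * replace (Rpower h b / h) with (Rpower h (b - 1)).
        2:{ replace b with ((b - 1) + 1) at 2 by ring. rewrite Rpower_plus, Rpower_1 by lra. field. lra. }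
        rewrite Rabs_pos_eq by (unfold Rpower; left; apply exp_pos). apply Hd'.
        rewrite Rabs_pos_eq in Hh; lra.
      * unfold Rdiv. rewrite Rmult_0_l, Rabs_R0. exact Heps.
Qed.

Fixpoint poch (a : R) (n : nat) : R :=
  match n with O => a | S m => poch a m * (a + INR (S m)) end.

Lemma poch_shift a n : poch a (S n) = a * poch (a + 1) n.
Proof.
  induction n as [|n IH].
  - simpl. ring.
  - change (poch a (S (S n))) with (poch a (S n) * (a + INR (S (S n)))).
    rewrite IH. change (poch (a + 1) (S n)) with (poch (a + 1) n * (a + 1 + INR (S n))). rewrite !S_INR. ring.
Qed.

Lemma poch_pos a n : 0 < a -> 0 < poch a n.
Proof.
  intros Ha. induction n as [|n IH]; simpl; [exact Ha|].
  apply Rmult_lt_0_compat; [exact IH|]. pose proof (pos_INR n). destruct n; simpl in *; lra.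
Qed.

Lemma is_derive_eq (f : R -> R) x l l' : l = l' -> is_derive f x l -> is_derive f x l'.
Proof. intros ->; auto. Qed.

Ltac toR := match goal with |- ?x = ?y => change (@eq R x y) end.
Lemma plus_R (x y : R) : plus x y = x + y. Proof. reflexivity. Qed.
Lemma scal_R (x y : R) : scal x y = x * y. Proof. reflexivity. Qed.
Lemma minus_R (x y : R) : minus x y = x - y. Proof. reflexivity. Qed.

Lemma is_RInt_val (f : R -> R) a b l l' : is_RInt f a b l -> l = l' -> is_RInt f a b l'.
Proof. intros H <-; exact H. Qed.

Lemma cont_poly_T (T : R) n t : continuous (fun t => (1 - t / T) ^ n) t.
Proof. apply (ex_derive_continuous (K := R_AbsRing) (V := R_NormedModule)). auto_derive. exact I. Qed.

Lemma cont_Pw_poly b T n t : 0 < b -> continuous (fun t => Pw b t * (1 - t / T) ^ n) t.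
Proof.
  intros Hb. apply (continuous_mult (K := R_AbsRing) (Pw b) (fun t => (1 - t / T) ^ n)).
  - apply Pw_cont, Hb.
  - apply cont_poly_T.
Qed.

Lemma beta_T (T : R) (HT : 0 < T) (n : nat) : forall a, 1 < a ->
  is_RInt (fun t => Pw (a - 1) t * (1 - t / T) ^ n) 0 T (Rpower T a * (INR (Factorial.fact n) / poch a n)).
Proof.
  induction n as [|n IH]; intros a Ha.
  - assert (H := is_RInt_derive (fun t => / a * Pw a t) (fun t => Pw (a - 1) t * (1 - t / T) ^ 0) 0 T).
    replace (Rpower T a * (INR (Factorial.fact 0) / poch a 0)) with (minus (/ a * Pw a T) (/ a * Pw a 0)).
    + apply H.
      * intros t _. apply is_derive_eq with (/ a * (a * Pw (a - 1) t)).
        { simpl. field. lra. }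
        apply is_derive_scal, Pw_der, Ha.
      * intros t _. apply cont_Pw_poly. lra.
    + rewrite (Pw_npos a 0) by lra. rewrite Pw_pos by lra. unfold minus, plus, opp; simpl. field. lra.
  - set (c := (INR n + 1) / (a * T)).
    assert (H := is_RInt_derive (fun t => / a * (Pw a t * (1 - t / T) ^ (S n)))
       (fun t => Pw (a - 1) t * (1 - t / T) ^ (S n) + (- c) * (Pw a t * (1 - t / T) ^ n)) 0 T).
    assert (H0 : is_RInt (fun t => Pw (a - 1) t * (1 - t / T) ^ (S n) + (- c) * (Pw a t * (1 - t / T) ^ n)) 0 T 0).
    { eapply is_RInt_val; [apply H|].
      3:{ cbv beta. rewrite (Pw_npos a 0) by lra. replace (1 - T / T) with 0 by (field; lra).
          unfold minus, plus, opp; simpl. ring. }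
      - intros t _. 
        apply is_derive_eq with (/ a * ((a * Pw (a - 1) t) * (1 - t / T) ^ S n + Pw a t * (INR (S n) * (- / T) * (1 - t / T) ^ n))).
        { unfold c. rewrite S_INR. change (@eq R (/ a * (a * Pw (a - 1) t * (1 - t / T) ^ S n + Pw a t * ((INR n + 1) * - / T * (1 - t / T) ^ n))) (Pw (a - 1) t * (1 - t / T) ^ S n + - ((INR n + 1) / (a * T)) * (Pw a t * (1 - t / T) ^ n))). field. split; lra. }
        apply is_derive_scal.
        apply (is_derive_mult (K := R_AbsRing) (Pw a) (fun t => (1 - t / T) ^ S n)).
        + apply Pw_der, Ha.
        + auto_derive; [exact I|]. simpl pred. change (match n with 0%nat => 1 | S _ => INR n + 1 end) with (INR (S n)). rewrite S_INR. unfold Rminus, Rdiv. ring.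
        + intros; apply Rmult_comm.
      - intros t _.
        apply (continuous_plus (K := R_AbsRing) (V := R_NormedModule)
          (fun t => Pw (a - 1) t * (1 - t / T) ^ S n) (fun t => - c * (Pw a t * (1 - t / T) ^ n))).
        + apply cont_Pw_poly. lra.
        + apply (continuous_mult (K := R_AbsRing) (fun _ => - c) (fun t => Pw a t * (1 - t / T) ^ n)).
          * apply continuous_const.
          * apply cont_Pw_poly. lra. }
    clear H.
    assert (H1 := IH (a + 1) ltac:(lra)).
    replace (a + 1 - 1) with a in H1 by ring.
    assert (H2 := is_RInt_scal _ _ _ c _ H1).
    assert (H3 := is_RInt_plus _ _ _ _ _ _ H0 H2).
    replace (Rpower T a * (INR (Factorial.fact (S n)) / poch a (S n)))
      with (plus 0 (scal c (Rpower T (a + 1) * (INR (Factorial.fact n) / poch (a + 1) n)))).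
    + eapply is_RInt_ext; [|exact H3]. intros t _. cbv beta. toR. unfold plus, scal; simpl; unfold mult; simpl. ring.
    + change (Factorial.fact (S n)) with (S n * Factorial.fact n)%nat. rewrite mult_INR, S_INR, poch_shift.
      rewrite Rpower_plus, Rpower_1 by lra.
      pose proof (poch_pos (a + 1) n ltac:(lra)).
      toR. unfold plus, scal; simpl; unfold mult; simpl. unfold c. field. repeat split; lra.
Qed.

Lemma ln_le_sub1 y : 0 < y -> ln y <= y - 1.
Proof. intros Hy. pose proof (exp_ineq1_le (ln y)). rewrite exp_ln in H by exact Hy. lra. Qed.

Definition Kc (s : R) : R := exp (s * (ln (2 * s) - 1)).

Lemma Kc_pos s : 0 < Kc s.
Proof. apply exp_pos. Qed.

Lemma gint_bound s t : 0 < s -> Pw s t * exp (- t) <= Kc s * exp (- t / 2).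
Proof.
  intros Hs. destruct (Rlt_le_dec 0 t) as [Ht|Ht].
  - rewrite Pw_pos by exact Ht. unfold Rpower, Kc. rewrite <- !exp_plus.
    destruct (Rle_lt_dec (s * ln t + - t) (s * (ln (2 * s) - 1) + - t / 2)) as [H|H].
    + destruct H as [H|H]; [left; apply exp_increasing; exact H| rewrite H; right; reflexivity].
    + exfalso.
      assert (Hl := ln_le_sub1 (t / (2 * s)) ltac:(apply Rdiv_lt_0_compat; lra)).
      rewrite ln_div in Hl by lra.
      apply (Rmult_le_compat_l s) in Hl; [|lra].
      replace (s * (t / (2 * s) - 1)) with (t / 2 - s) in Hl by (field; lra). lra.
  - rewrite Pw_npos by exact Ht. rewrite Rmult_0_l. left. apply Rmult_lt_0_compat; [apply Kc_pos|apply exp_pos].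
Qed.

Lemma is_RInt_exp_half a b : is_RInt (fun t => exp (- t / 2)) a b (2 * exp (- a / 2) - 2 * exp (- b / 2)).
Proof.
  eapply is_RInt_val.
  - apply (is_RInt_derive (fun t => - 2 * exp (- t / 2))).
    + intros t _. auto_derive; [exact I|]. toR. unfold Rdiv. field.
    + intros t _. apply (ex_derive_continuous (K := R_AbsRing) (V := R_NormedModule)). auto_derive. exact I.
  - cbv beta. toR. unfold minus, plus, opp; simpl. ring.
Qed.

Definition gint (s t : R) : R := Pw s t * exp (- t).
Definition Phi (s b : R) : R := RInt (gint s) 0 b.

Lemma gint_cont s t : 0 < s -> continuous (gint s) t.
Proof.
  intros Hs. apply (continuous_mult (K := R_AbsRing) (Pw s) (fun t => exp (- t))).
  - apply Pw_cont, Hs.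
  - apply (ex_derive_continuous (K := R_AbsRing) (V := R_NormedModule)). auto_derive. exact I.
Qed.

Lemma gint_ex s a b : 0 < s -> ex_RInt (gint s) a b.
Proof. intros Hs. apply (ex_RInt_continuous (V := R_CompleteNormedModule)). intros; apply gint_cont, Hs. Qed.

Lemma gint_ge0 s t : 0 <= gint s t.
Proof. unfold gint. apply Rmult_le_pos; [apply Pw_ge0|left; apply exp_pos]. Qed.

Lemma Phi_diff s a b : 0 < s -> a <= b -> Phi s b - Phi s a = RInt (gint s) a b.
Proof.
  intros Hs Hab. unfold Phi.
  rewrite <- (RInt_Chasles (V := R_CompleteNormedModule) (gint s) 0 a b) by (apply gint_ex, Hs).
  toR. unfold plus; simpl. ring.
Qed.

Lemma RInt_gint_bounds s a b : 0 < s -> a <= b ->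
  0 <= RInt (gint s) a b <= 2 * Kc s * (exp (- a / 2) - exp (- b / 2)).
Proof.
  intros Hs Hab. split.
  - apply RInt_ge_0; [exact Hab| apply gint_ex, Hs|]. intros; apply gint_ge0.
  - assert (H : is_RInt (fun t => Kc s * exp (- t / 2)) a b (Kc s * (2 * exp (- a / 2) - 2 * exp (- b / 2))))
      by (apply (is_RInt_scal (fun t => exp (-t/2))), is_RInt_exp_half).
    assert (E : RInt (fun t => Kc s * exp (- t / 2)) a b = Kc s * (2 * exp (- a / 2) - 2 * exp (- b / 2)))
      by (apply (is_RInt_unique (V := R_CompleteNormedModule)); exact H).
    apply Rle_trans with (RInt (fun t => Kc s * exp (- t / 2)) a b).
    + apply RInt_le; [exact Hab | apply gint_ex, Hs | eexists; exact H |].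
      intros t _. apply gint_bound, Hs.
    + rewrite E. right. ring.
Qed.

Lemma Phi_small s a : 0 < s -> 0 <= a <= 1 -> 0 <= Phi s a <= a.
Proof.
  intros Hs Ha. unfold Phi. split.
  - apply RInt_ge_0; [lra| apply gint_ex, Hs|]. intros; apply gint_ge0.
  - assert (H : is_RInt (fun _ => 1) 0 a (a * 1)).
    { eapply is_RInt_val; [apply (is_RInt_const (V := R_NormedModule) 0 a 1)|]. toR. unfold scal; simpl; unfold mult; simpl. ring. }
    assert (E : RInt (fun _ => 1) 0 a = a * 1) by (apply (is_RInt_unique (V := R_CompleteNormedModule)); exact H).
    apply Rle_trans with (RInt (fun _ => 1) 0 a).
    + apply RInt_le; [lra | apply gint_ex, Hs | eexists; exact H |].
      intros t Ht. unfold gint. rewrite <- (Rmult_1_r 1).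
      apply Rmult_le_compat; [apply Pw_ge0 | left; apply exp_pos | apply Pw_le1; lra |].
      rewrite <- exp_0. left. apply exp_increasing. lra.
    + rewrite E. right. ring.
Qed.

Definition Lg (s : R) : R := real (Lim_seq (fun n => Phi s (INR n))).

Lemma Lg_is s : 0 < s -> is_lim_seq (fun n => Phi s (INR n)) (Lg s).
Proof.
  intros Hs. unfold Lg.
  assert (Hf : ex_finite_lim_seq (fun n => Phi s (INR n))).
  { apply ex_finite_lim_seq_incr with (M := 2 * Kc s).
    - intros n. pose proof (RInt_gint_bounds s (INR n) (INR (S n)) Hs ltac:(rewrite S_INR; lra)).
      rewrite <- Phi_diff in H by (auto; rewrite S_INR; lra). lra.
    - intros n. pose proof (pos_INR n).
      pose proof (RInt_gint_bounds s 0 (INR n) Hs H).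
      pose proof (Phi_diff s 0 (INR n) Hs H). 
      assert (Phi s 0 = 0) by (unfold Phi; apply (RInt_point (V := R_CompleteNormedModule))).
      pose proof (exp_pos (- INR n / 2)). pose proof (Kc_pos s).
      replace (- 0 / 2) with 0 in H0 by field. rewrite exp_0 in H0. nra. }
  pose proof (Lim_seq_correct' _ Hf) as H.
  apply ex_finite_lim_seq_correct in Hf. destruct Hf as [_ Hf].
  exact H.
Qed.

Lemma Lg_bound s b : 0 < s -> 0 <= b -> 0 <= Lg s - Phi s b <= 2 * Kc s * exp (- b / 2).
Proof.
  intros Hs Hb.
  destruct (INR_unbounded b) as [N HN].
  assert (Hl : is_lim_seq (fun n => Phi s (INR (n + N)) - Phi s b) (Lg s - Phi s b)).
  { apply (is_lim_seq_minus _ _ (Lg s) (Phi s b) (Lg s - Phi s b)).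
    - apply (is_lim_seq_incr_n (fun n => Phi s (INR n)) N). apply Lg_is, Hs.
    - apply is_lim_seq_const.
    - reflexivity. }
  assert (Hbd : forall n, 0 <= Phi s (INR (n + N)) - Phi s b <= 2 * Kc s * exp (- b / 2)).
  { intros n. assert (b <= INR (n + N)) by (rewrite plus_INR; pose proof (pos_INR n); lra).
    rewrite Phi_diff by auto. pose proof (RInt_gint_bounds s b (INR (n + N)) Hs H).
    pose proof (exp_pos (- INR (n + N) / 2)). pose proof (Kc_pos s). nra. }
  split.
  - apply (is_lim_seq_le (fun _ => 0) _ 0 _ (fun n => proj1 (Hbd n)) (is_lim_seq_const 0) Hl).
  - apply (is_lim_seq_le _ (fun _ => 2 * Kc s * exp (- b / 2)) _ (2 * Kc s * exp (- b / 2)) (fun n => proj2 (Hbd n)) Hl (is_lim_seq_const _)).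
Qed.

Lemma ball_R (c e y : R) : ball c e y <-> Rabs (y - c) < e.
Proof. unfold ball; simpl; unfold AbsRing_ball, abs, minus, plus, opp; simpl. reflexivity. Qed.

Lemma exp_neg_half_le b : 0 < b -> exp (- b / 2) <= 2 / b.
Proof.
  intros Hb. pose proof (exp_ineq1_le (b / 2)).
  replace (- b / 2) with (- (b / 2)) by field. rewrite exp_Ropp.
  pose proof (exp_pos (b / 2)).
  apply (Rmult_le_reg_r (exp (b / 2))); [lra|]. rewrite Rinv_l by lra.
  apply (Rmult_le_reg_l b); [lra|]. field_simplify; lra.
Qed.

Lemma Gamma_is x : 1 < x ->
  is_RInt_gen (fun t => Rpower t (x - 1) * exp (- t)) (at_right 0) (Rbar_locally p_infty) (Lg (x - 1)).
Proof.
  intros Hx. set (s := x - 1). assert (Hs : 0 < s) by (unfold s; lra).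
  intros P [eps HP].
  set (K := Kc s). assert (HK : 0 < K) by apply Kc_pos.
  set (M := Rmax 1 (8 * K / eps)).
  apply Filter_prod with (Q := fun a => 0 < a < Rmin 1 (eps / 2)) (R := fun b => M < b).
  - assert (Hd : 0 < Rmin 1 (eps / 2)) by (apply Rmin_pos; destruct eps; simpl; lra).
    exists (mkposreal _ Hd). intros y Hy Hy0. idtac.
    assert (Hy1 := proj1 (ball_R 0 _ y) Hy). rewrite Rminus_0_r in Hy1. apply Rabs_def2 in Hy1. simpl in Hy1. lra.
  - exists M. auto.
  - intros a b [Ha0 Ha1] Hb. simpl.
    assert (Hm1 : 1 <= M) by apply Rmax_l.
    assert (Hm2 : 8 * K / eps <= M) by apply Rmax_r.
    assert (Ha1' : a < 1) by (pose proof (Rmin_l 1 (eps / 2)); lra).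
    assert (Ha2 : a < eps / 2) by (pose proof (Rmin_r 1 (eps / 2)); lra).
    exists (Phi s b - Phi s a). split.
    + rewrite Phi_diff by (auto; lra).
      apply (is_RInt_ext (gint s)).
      * intros t Ht. rewrite Rmin_left in Ht by lra. unfold gint. rewrite Pw_pos by lra. reflexivity.
      * apply (RInt_correct (V := R_CompleteNormedModule)). apply gint_ex, Hs.
    + apply HP. apply ball_R.
      pose proof (Phi_small s a Hs ltac:(lra)).
      pose proof (Lg_bound s b Hs ltac:(lra)).
      pose proof (exp_neg_half_le b ltac:(lra)).
      assert (2 * K * exp (- b / 2) < eps / 2).
      { apply Rle_lt_trans with (2 * K * (2 / b)).
        - apply Rmult_le_compat_l; lra.
        - destruct eps as [e He]; simpl in *.
          apply (Rmult_lt_reg_r b); [lra|]. unfold Rdiv. field_simplify; [|lra].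
          assert (8 * K / e < b) by lra. apply (Rmult_lt_compat_r e) in H2; [|lra].
          unfold Rdiv in H2. rewrite Rmult_assoc, Rinv_l, Rmult_1_r in H2 by lra. lra. }
      fold K in H0. apply Rabs_def1; lra.
Qed.

Lemma Gamma_eq x : 1 < x -> Gamma x = Lg (x - 1).
Proof.
  intros Hx. unfold Gamma. apply is_RInt_gen_unique. apply Gamma_is, Hx.
Qed.

Lemma exp_mult_nat N y : exp (INR N * y) = exp y ^ N.
Proof.
  induction N as [|N IH]; [simpl; rewrite Rmult_0_l; apply exp_0|].
  rewrite S_INR, Rmult_plus_distr_r, exp_plus, IH, Rmult_1_l. simpl. ring.
Qed.

Lemma bern N u : 0 <= u <= 1 -> 1 - INR N * u <= (1 - u) ^ N.
Proof.
  intros Hu. induction N as [|N IH]; [simpl; lra|].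
  rewrite S_INR. simpl pow.
  assert (0 <= INR N) by apply pos_INR.
  apply Rle_trans with ((1 - u) * (1 - INR N * u)); [nra|].
  apply Rmult_le_compat_l; lra.
Qed.

Lemma approx_ineq N t : (1 <= N)%nat -> 0 <= t <= INR N ->
  0 <= exp (- t) - (1 - t / INR N) ^ N <= t ^ 2 * exp (- t) / INR N.
Proof.
  intros HN Ht. assert (HNp : 0 < INR N) by (apply lt_0_INR; lia).
  assert (E1 : exp (- t) = exp (- t / INR N) ^ N).
  { rewrite <- exp_mult_nat. f_equal. field. lra. }
  assert (E2 : exp t = exp (t / INR N) ^ N).
  { rewrite <- exp_mult_nat. f_equal. field. lra. }
  assert (H0 : 0 <= 1 - t / INR N).
  { apply (Rmult_le_reg_r (INR N)); [lra|]. unfold Rdiv. field_simplify; lra. }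
  split.
  - rewrite E1. cut ((1 - t / INR N) ^ N <= exp (- t / INR N) ^ N); [lra|]. apply pow_incr. split; [exact H0|].
    pose proof (exp_ineq1_le (- t / INR N)). unfold Rdiv in *. lra.
  - assert (H1 : (1 + t / INR N) ^ N <= exp t).
    { rewrite E2. apply pow_incr. split.
      - assert (0 <= t / INR N) by (apply Rdiv_le_0_compat; lra). lra.
      - pose proof (exp_ineq1_le (t / INR N)). lra. }
    assert (H2 : 1 - t ^ 2 / INR N <= (1 + t / INR N) ^ N * (1 - t / INR N) ^ N).
    { rewrite <- Rpow_mult_distr.
      replace ((1 + t / INR N) * (1 - t / INR N)) with (1 - (t / INR N) ^ 2) by ring.
      replace (t ^ 2 / INR N) with (INR N * (t / INR N) ^ 2) by (field; lra).
      apply bern. split; [apply pow2_ge_0|].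
      assert (0 <= t / INR N <= 1).
      { split; [apply Rdiv_le_0_compat; lra|]. apply (Rmult_le_reg_r (INR N)); [lra|].
        unfold Rdiv. rewrite Rmult_assoc, Rinv_l, Rmult_1_r by lra. lra. }
      nra. }
    assert (H3 : 0 <= (1 - t / INR N) ^ N) by (apply pow_le; exact H0).
    assert (H4 : 1 - t ^ 2 / INR N <= exp t * (1 - t / INR N) ^ N) by nra.
    pose proof (exp_pos (- t)).
    assert (H5 : exp (- t) * exp t = 1) by (rewrite <- exp_plus; replace (- t + t) with 0 by ring; apply exp_0).
    apply (Rmult_le_compat_l (exp (- t))) in H4; [|lra].
    replace (exp (- t) * (exp t * (1 - t / INR N) ^ N)) with ((1 - t / INR N) ^ N) in H4
      by (rewrite <- Rmult_assoc, H5; ring).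
    replace (t ^ 2 * exp (- t) / INR N) with (exp (- t) * (t ^ 2 / INR N)) by (field; lra).
    nra.
Qed.

Definition GN (x : R) (n : nat) : R := Rpower (INR (S n)) x * (INR (Factorial.fact (S n)) / poch x (S n)).

Lemma GN_pos x n : 0 < x -> 0 < GN x n.
Proof.
  intros Hx. unfold GN. apply Rmult_lt_0_compat; [unfold Rpower; apply exp_pos|].
  apply Rdiv_lt_0_compat; [apply INR_fact_lt_0 | apply poch_pos, Hx].
Qed.

Lemma Gauss_bounds x n : 1 < x ->
  0 <= Gamma x - GN x n <= (4 * Kc (x - 1) + 2 * Kc (x - 1 + 2)) / INR (S n).
Proof.
  intros Hx. set (s := x - 1). assert (Hs : 0 < s) by (unfold s; lra).
  set (T := INR (S n)). assert (HT : 0 < T) by (unfold T; apply lt_0_INR; lia).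
  assert (HB := beta_T T HT (S n) x Hx). fold s in HB.
  assert (HG : is_RInt (gint s) 0 T (Phi s T)) by (apply (RInt_correct (V := R_CompleteNormedModule)), gint_ex, Hs).
  assert (HD := is_RInt_minus _ _ _ _ _ _ HG HB).
  set (D := minus (Phi s T) (Rpower T x * (INR (Factorial.fact (S n)) / poch x (S n)))) in HD.
  set (h := fun t => Pw s t * (exp (- t) - (1 - t / T) ^ S n)).
  assert (HD' : is_RInt h 0 T D).
  { eapply is_RInt_ext; [|exact HD]. intros t _. cbv beta. toR. unfold h, gint, minus, plus, opp; simpl. ring. }
  assert (Hh : forall t, 0 < t < T -> 0 <= h t <= gint (s + 2) t / T).
  { intros t Ht. unfold h, gint.
    assert (Hi := approx_ineq (S n) t ltac:(lia) ltac:(unfold T in Ht; lra)). fold T in Hi.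
    rewrite Pw_add, Pw_two by lra. pose proof (Pw_ge0 s t). split; [nra|].
    replace (Pw s t * t ^ 2 * exp (- t) / T) with (Pw s t * (t ^ 2 * exp (- t) / T)) by (field; lra).
    nra. }
  assert (HDb : 0 <= D <= 2 * Kc (s + 2) / T).
  { assert (ED : RInt h 0 T = D) by (apply (is_RInt_unique (V := R_CompleteNormedModule)); exact HD').
    assert (Hq : is_RInt (fun t => / T * gint (s + 2) t) 0 T (/ T * Phi (s + 2) T)).
    { apply (is_RInt_scal (gint (s + 2))). apply (RInt_correct (V := R_CompleteNormedModule)), gint_ex. lra. }
    assert (Eq : RInt (fun t => / T * gint (s + 2) t) 0 T = / T * Phi (s + 2) T)
      by (apply (is_RInt_unique (V := R_CompleteNormedModule)); exact Hq).
    rewrite <- ED. split.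
    - apply RInt_ge_0; [lra| eexists; exact HD'|]. intros t Ht. apply Hh, Ht.
    - apply Rle_trans with (RInt (fun t => / T * gint (s + 2) t) 0 T).
      + apply RInt_le; [lra | eexists; exact HD' | eexists; exact Hq |].
        intros t Ht. rewrite Rmult_comm. apply Hh, Ht.
      + rewrite Eq. 
        pose proof (RInt_gint_bounds (s + 2) 0 T ltac:(lra) ltac:(lra)). fold (Phi (s + 2) T) in H.
        pose proof (exp_pos (- T / 2)). replace (- 0 / 2) with 0 in H by field. rewrite exp_0 in H.
        pose proof (Kc_pos (s + 2)).
        unfold Rdiv. rewrite (Rmult_comm (2 * Kc (s + 2))). apply Rmult_le_compat_l.
        * left; apply Rinv_0_lt_compat, HT.
        * nra. }
  assert (EG : Gamma x - GN x n = (Lg s - Phi s T) + D).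
  { rewrite Gamma_eq by exact Hx. fold s. unfold D, GN. fold T. toR. unfold minus, plus, opp; simpl. ring. }
  rewrite EG.
  pose proof (Lg_bound s T Hs ltac:(lra)).
  pose proof (exp_neg_half_le T HT). pose proof (Kc_pos s).
  assert (2 * Kc s * exp (- T / 2) <= 4 * Kc s / T).
  { apply Rle_trans with (2 * Kc s * (2 / T)); [apply Rmult_le_compat_l; lra|]. right; field; lra. }
  split; [lra|].
  replace ((4 * Kc s + 2 * Kc (s + 2)) / T) with (4 * Kc s / T + 2 * Kc (s + 2) / T) by (field; lra).
  lra.
Qed.

Lemma Gauss_lim x : 1 < x -> is_lim_seq (GN x) (Gamma x).
Proof.
  intros Hx. set (C := 4 * Kc (x - 1) + 2 * Kc (x - 1 + 2)).
  apply is_lim_seq_le_le with (u := fun n => Gamma x - C * / (INR n + 1)) (w := fun _ => Gamma x).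
  - intros n. pose proof (Gauss_bounds x n Hx). fold C in H. rewrite S_INR in H. unfold Rdiv in H. lra.
  - assert (H : is_lim_seq (fun n => Gamma x - C * / (INR n + 1)) (Gamma x - C * 0)).
    2:{ rewrite Rmult_0_r, Rminus_0_r in H. exact H. }
    apply (is_lim_seq_minus _ _ (Gamma x) (C * 0) (Gamma x - C * 0)).
    + apply is_lim_seq_const.
    + apply (is_lim_seq_scal_l _ C 0). 
      assert (H := is_lim_seq_INR). apply is_lim_seq_incr_1 in H. apply is_lim_seq_inv in H; [|discriminate].
      eapply is_lim_seq_ext; [|exact H]. intros n. cbv beta. rewrite S_INR. reflexivity.
    + reflexivity.
  - apply is_lim_seq_const.
Qed.

Lemma Gamma_pos x : 1 < x -> 0 < Gamma x.
Proof. intros Hx. pose proof (Gauss_bounds x 0 Hx). pose proof (GN_pos x 0 ltac:(lra)). lra. Qed.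

Lemma ln_poch a n : 0 < a -> ln (poch a n) = sum_f_R0 (fun k => ln (a + INR k)) n.
Proof.
  intros Ha. induction n as [|n IH].
  - simpl. rewrite Rplus_0_r. reflexivity.
  - change (poch a (S n)) with (poch a n * (a + INR (S n))).
    rewrite ln_mult, IH; [reflexivity | apply poch_pos, Ha | pose proof (pos_INR (S n)); lra].
Qed.

Lemma lnGN x n : 0 < x -> ln (GN x n) =
  x * ln (INR (S n)) + ln (INR (Factorial.fact (S n))) - sum_f_R0 (fun k => ln (x + INR k)) (S n).
Proof.
  intros Hx. unfold GN.
  assert (0 < INR (S n)) by (apply lt_0_INR; lia).
  pose proof (INR_fact_lt_0 (S n)). pose proof (poch_pos x (S n) Hx).
  rewrite ln_mult by (try (unfold Rpower; apply exp_pos); apply Rdiv_lt_0_compat; auto).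
  rewrite ln_div by auto. rewrite ln_poch by auto. unfold Rpower. rewrite ln_exp. ring.
Qed.

Lemma lnGauss x : 1 < x -> is_lim_seq (fun n =>
  x * ln (INR (S n)) + ln (INR (Factorial.fact (S n))) - sum_f_R0 (fun k => ln (x + INR k)) (S n)) (ln (Gamma x)).
Proof.
  intros Hx. eapply is_lim_seq_ext.
  - intros n. apply lnGN. lra.
  - apply (is_lim_seq_continuous ln (GN x)).
    + apply derivable_continuous_pt. exists (/ Gamma x). apply derivable_pt_lim_ln, Gamma_pos, Hx.
    + apply Gauss_lim, Hx.
Qed.


Lemma lim_inv_S' : is_lim_seq (fun n => / (INR n + 1)) 0.
Proof.
  assert (H : is_lim_seq (fun n => INR (S n)) p_infty) by (apply -> is_lim_seq_incr_1; apply is_lim_seq_INR).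
  apply is_lim_seq_inv in H; [|discriminate].
  eapply is_lim_seq_ext; [|exact H]. intros n. cbv beta. rewrite S_INR. reflexivity.
Qed.

Definition SN (u : R) (N : nat) : R := sum_f_R0 (fun k => / (u + INR k) ^ 2) N.
Definition Sser (u : R) : R := real (Lim_seq (SN u)).

Lemma SN_S u N : SN u (S N) = SN u N + / (u + INR (S N)) ^ 2.
Proof. reflexivity. Qed.

Lemma SN_tail u N p : 0 < u -> SN u (N + p) - SN u N <= / (u + INR N) - / (u + INR (N + p)).
Proof.
  intros Hu. induction p as [|p IH].
  - rewrite Nat.add_0_r. lra.
  - replace (N + S p)%nat with (S (N + p)) by lia. rewrite SN_S.
    assert (0 <= INR (N + p)) by apply pos_INR.
    rewrite S_INR.
    assert (/ (u + (INR (N + p) + 1)) ^ 2 <= / (u + INR (N + p)) - / (u + (INR (N + p) + 1))).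
    { set (v := u + INR (N + p)). assert (0 < v) by (unfold v; lra).
      replace (u + (INR (N + p) + 1)) with (v + 1) by (unfold v; ring).
      replace (/ v - / (v + 1)) with (/ (v * (v + 1))) by (field; lra).
      apply Rinv_le_contravar; [nra|]. nra. }
    lra.
Qed.

Lemma SN_incr u N : SN u N <= SN u (S N).
Proof. rewrite SN_S. pose proof (pow2_ge_0 (u + INR (S N))). 
  assert (0 <= / (u + INR (S N)) ^ 2).
  { destruct (Req_dec ((u + INR (S N)) ^ 2) 0) as [E|E]; [rewrite E, Rinv_0; lra|]. left; apply Rinv_0_lt_compat; lra. }
  lra. Qed.

Lemma SN_is u : 0 < u -> is_lim_seq (SN u) (Sser u).
Proof.
  intros Hu. unfold Sser.
  assert (Hf : ex_finite_lim_seq (SN u)).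
  { apply ex_finite_lim_seq_incr with (M := SN u 0 + / u).
    - apply SN_incr.
    - intros n. pose proof (SN_tail u 0 n Hu). simpl (0 + n)%nat in H. simpl (INR 0) in H.
      rewrite Rplus_0_r in H. assert (0 < / (u + INR n)) by (apply Rinv_0_lt_compat; pose proof (pos_INR n); lra).
      lra. }
  pose proof (Lim_seq_correct' _ Hf) as H. exact H.
Qed.

Lemma S_tail u N : 0 < u -> 0 <= Sser u - SN u N <= / (u + INR N).
Proof.
  intros Hu.
  assert (Hl : is_lim_seq (fun p => SN u (p + N) - SN u N) (Sser u - SN u N)).
  { apply (is_lim_seq_minus _ _ (Sser u) (SN u N) (Sser u - SN u N)).
    - apply (is_lim_seq_incr_n (SN u) N). apply SN_is, Hu.
    - apply is_lim_seq_const.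
    - reflexivity. }
  assert (Hb : forall p, 0 <= SN u (p + N) - SN u N <= / (u + INR N)).
  { intros p. rewrite Nat.add_comm. split.
    - induction p as [|p IH]; [rewrite Nat.add_0_r; lra|].
      replace (N + S p)%nat with (S (N + p)) by lia. pose proof (SN_incr u (N + p)). lra.
    - pose proof (SN_tail u N p Hu). assert (0 < / (u + INR (N + p))) by (apply Rinv_0_lt_compat; pose proof (pos_INR (N + p)); lra). lra. }
  split.
  - apply (is_lim_seq_le (fun _ => 0) _ 0 _ (fun n => proj1 (Hb n)) (is_lim_seq_const 0) Hl).
  - apply (is_lim_seq_le _ (fun _ => / (u + INR N)) _ (/ (u + INR N)) (fun n => proj2 (Hb n)) Hl (is_lim_seq_const _)).
Qed.

Lemma inv_sq_cont a y : 0 < y + a -> continuous (fun u => / (u + a) ^ 2) y.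
Proof.
  intros H. apply (ex_derive_continuous (K := R_AbsRing) (V := R_NormedModule)).
  auto_derive. rewrite Rmult_1_r. apply Rmult_integral_contrapositive; split; lra.
Qed.

Lemma SN_cont N y : 0 < y -> continuous (fun u => SN u N) y.
Proof.
  intros Hy. induction N as [|N IH].
  - unfold SN. simpl sum_f_R0. apply (ex_derive_continuous (K := R_AbsRing) (V := R_NormedModule)).
    auto_derive. rewrite Rplus_0_r, Rmult_1_r. apply Rmult_integral_contrapositive; split; lra.
  - apply (continuous_ext (fun u => SN u N + / (u + INR (S N)) ^ 2)).
    + intros u. symmetry. apply SN_S.
    + apply (continuous_plus (K := R_AbsRing) (V := R_NormedModule) (fun u => SN u N) (fun u => / (u + INR (S N)) ^ 2)).
      * exact IH.
      * apply inv_sq_cont. pose proof (pos_INR (S N)). lra.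
Qed.

Lemma Sser_cont y : 0 < y -> continuous Sser y.
Proof.
  intros Hy. apply continuity_pt_filterlim. unfold continuity_pt, continue_in, limit1_in, limit_in.
  intros eps Heps.
  destruct (INR_unbounded (3 / eps)) as [N HN].
  assert (HNp : 0 < INR N) by (assert (0 < 3 / eps) by (apply Rdiv_lt_0_compat; lra); lra).
  assert (HNe : / INR N < eps / 3).
  { apply (Rmult_lt_reg_r (INR N)); [lra|]. rewrite Rinv_l by lra.
    apply (Rmult_lt_compat_r eps) in HN; [|lra]. unfold Rdiv in *. 
    replace (3 * / eps * eps) with 3 in HN by (field; lra). lra. }
  assert (Hc := SN_cont N y Hy). apply continuity_pt_filterlim in Hc.
  unfold continuity_pt, continue_in, limit1_in, limit_in in Hc.
  destruct (Hc (eps / 3) ltac:(lra)) as [d [Hd Hd']].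
  exists (Rmin d (y / 2)). split; [apply Rmin_pos; lra|].
  intros z [_ Hz]. simpl in *. unfold R_dist in *.
  assert (Hz1 : Rabs (z - y) < d) by (pose proof (Rmin_l d (y / 2)); lra).
  assert (Hz2 : Rabs (z - y) < y / 2) by (pose proof (Rmin_r d (y / 2)); lra).
  apply Rabs_def2 in Hz2 as [Hz2 Hz3].
  destruct (Req_dec z y) as [Ezy|Hne].
  { subst z. unfold Rminus. rewrite Rplus_opp_r, Rabs_R0. lra. }
  specialize (Hd' z (conj (conj I (not_eq_sym Hne)) Hz1)). simpl in Hd'. unfold R_dist in Hd'.
  pose proof (S_tail z N ltac:(lra)). pose proof (S_tail y N Hy).
  assert (/ (z + INR N) <= / INR N) by (apply Rinv_le_contravar; lra).
  assert (/ (y + INR N) <= / INR N) by (apply Rinv_le_contravar; lra).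
  apply Rabs_def2 in Hd' as [Hd1 Hd2].
  apply Rabs_def1; lra.
Qed.



Lemma seg_pos c x u : 0 < c -> 0 < x -> Rmin c x <= u <= Rmax c x -> 0 < u.
Proof. intros Hc Hx Hu. destruct (Rle_dec c x); [rewrite Rmin_left in Hu by lra | rewrite Rmin_right in Hu by lra]; lra. Qed.

Lemma term_int c x k : 0 < c -> 0 < x ->
  is_RInt (fun u => (x - u) * / (u + INR k) ^ 2) c x (ln (c + INR k) - ln (x + INR k) + (x - c) / (c + INR k)).
Proof.
  intros Hc Hx. pose proof (pos_INR k).
  eapply is_RInt_val.
  { apply (is_RInt_derive (fun u => - (x - u) / (u + INR k) - ln (u + INR k)) (fun u => (x - u) * / (u + INR k) ^ 2)).
    - intros u Hu. pose proof (seg_pos c x u Hc Hx Hu).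
      auto_derive. 
      + repeat split; lra.
      + toR. field. lra.
    - intros u Hu. pose proof (seg_pos c x u Hc Hx Hu).
      apply (continuous_mult (K := R_AbsRing) (fun u => x - u) (fun u => / (u + INR k) ^ 2)).
      + apply (ex_derive_continuous (K := R_AbsRing) (V := R_NormedModule)). auto_derive. exact I.
      + apply inv_sq_cont. lra. }
  cbv beta. toR. unfold minus, plus, opp; simpl. field. lra.
Qed.

Definition PhiN (c x : R) (N : nat) : R :=
  sum_f_R0 (fun k => ln (c + INR k) - ln (x + INR k) + (x - c) / (c + INR k)) N.

Lemma PhiN_is c x N : 0 < c -> 0 < x -> is_RInt (fun u => (x - u) * SN u N) c x (PhiN c x N).
Proof.
  intros Hc Hx. induction N as [|N IH].
  - apply term_int; auto.
  - assert (H := is_RInt_plus _ _ _ _ _ _ IH (term_int c x (S N) Hc Hx)).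
    eapply is_RInt_ext; [|exact H]. intros u _. cbv beta. toR. rewrite SN_S. unfold plus; simpl. ring.
Qed.

Lemma PhiN_split c x N : PhiN c x N =
  sum_f_R0 (fun k => ln (c + INR k)) N - sum_f_R0 (fun k => ln (x + INR k)) N + (x - c) * sum_f_R0 (fun k => / (c + INR k)) N.
Proof.
  unfold PhiN. induction N as [|N IH]; [cbn [sum_f_R0]; unfold Rdiv; ring|].
  rewrite !tech5, IH. unfold Rdiv. ring.
Qed.

Lemma abs_RInt_le_gen (f : R -> R) a b M : ex_RInt f a b ->
  (forall t, Rmin a b <= t <= Rmax a b -> Rabs (f t) <= M) -> Rabs (RInt f a b) <= Rabs (b - a) * M.
Proof.
  intros He Hb. destruct (Rle_dec a b) as [Hab|Hab].
  - rewrite (Rabs_pos_eq (b - a)) by lra. apply abs_RInt_le_const; auto.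
    intros t Ht. apply Hb. rewrite Rmin_left, Rmax_right; lra.
  - rewrite <- (opp_RInt_swap (V := R_CompleteNormedModule) f b a (ex_RInt_swap _ _ _ He)).
    unfold opp; simpl. rewrite Rabs_Ropp.
    rewrite (Rabs_left (b - a)) by lra. replace (- (b - a)) with (a - b) by ring.
    apply abs_RInt_le_const; [lra| apply ex_RInt_swap, He|].
    intros t Ht. apply Hb. rewrite Rmin_right, Rmax_left; lra.
Qed.

Definition Fint (c x : R) : R := RInt (fun u => (x - u) * Sser u) c x.

Lemma Fint_ex c x : 0 < c -> 0 < x -> ex_RInt (fun u => (x - u) * Sser u) c x.
Proof.
  intros Hc Hx. apply (ex_RInt_continuous (V := R_CompleteNormedModule)). intros u Hu.
  pose proof (seg_pos c x u Hc Hx Hu).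
  apply (continuous_mult (K := R_AbsRing) (fun u => x - u) Sser).
  - apply (ex_derive_continuous (K := R_AbsRing) (V := R_NormedModule)). auto_derive. exact I.
  - apply Sser_cont. lra.
Qed.

Lemma Fint_lim c x : 1 <= c -> 1 <= x -> is_lim_seq (PhiN c x) (Fint c x).
Proof.
  intros Hc Hx. set (C := Rabs (x - c) * Rabs (x - c)).
  assert (Hb : forall N, Rabs (Fint c x - PhiN c x N) <= C * / (INR N + 1)).
  { intros N.
    assert (HP := PhiN_is c x N ltac:(lra) ltac:(lra)).
    assert (HF := RInt_correct (V := R_CompleteNormedModule) _ _ _ (Fint_ex c x ltac:(lra) ltac:(lra))).
    assert (HD := is_RInt_minus _ _ _ _ _ _ HF HP).
    assert (ED : RInt (fun u => minus ((x - u) * Sser u) ((x - u) * SN u N)) c x = minus (Fint c x) (PhiN c x N))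
      by (apply (is_RInt_unique (V := R_CompleteNormedModule)); exact HD).
    change (Fint c x - PhiN c x N) with (minus (Fint c x) (PhiN c x N)). rewrite <- ED.
    unfold C. rewrite Rmult_assoc.
    apply abs_RInt_le_gen; [eexists; exact HD|].
    intros t Ht. assert (Ht1 : 1 <= t) by (destruct (Rle_dec c x); [rewrite Rmin_left in Ht by lra | rewrite Rmin_right in Ht by lra]; lra).
    unfold minus, plus, opp; simpl.
    replace ((x - t) * Sser t + - ((x - t) * SN t N)) with ((x - t) * (Sser t - SN t N)) by ring.
    rewrite Rabs_mult. apply Rmult_le_compat; try apply Rabs_pos.
    - destruct (Rle_dec c x); [rewrite Rmin_left, Rmax_right in Ht by lra | rewrite Rmin_right, Rmax_left in Ht by lra];
      apply Rabs_le; split_Rabs; lra.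
    - pose proof (S_tail t N ltac:(lra)). rewrite Rabs_pos_eq by lra.
      apply Rle_trans with (/ (t + INR N)); [lra|]. apply Rinv_le_contravar; [pose proof (pos_INR N); lra| lra]. }
  assert (Hl : forall sg, is_lim_seq (fun N => Fint c x + sg * (C * / (INR N + 1))) (Fint c x)).
  { intros sg. assert (H : is_lim_seq (fun N => Fint c x + sg * (C * / (INR N + 1))) (Fint c x + sg * (C * 0))).
    2:{ rewrite Rmult_0_r, Rmult_0_r, Rplus_0_r in H. exact H. }
    apply (is_lim_seq_plus' _ _ (Fint c x) (sg * (C * 0))).
    + apply is_lim_seq_const.
    + apply (is_lim_seq_scal_l _ sg (C * 0)). apply (is_lim_seq_scal_l _ C 0). apply lim_inv_S'. }
  apply is_lim_seq_le_le with (u := fun N => Fint c x + (-1) * (C * / (INR N + 1))) (w := fun N => Fint c x + 1 * (C * / (INR N + 1))).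
  - intros N. specialize (Hb N). apply Rabs_le_between in Hb. lra.
  - apply Hl.
  - apply Hl.
Qed.


Lemma RInt_der_gen (g : R -> R) c y : 0 < c -> 0 < y -> (forall u, 0 < u -> continuous g u) ->
  is_derive (fun b => RInt g c b) y (g y).
Proof.
  intros Hc Hy Hg. apply (is_derive_RInt g (fun b => RInt g c b) c y).
  - exists (mkposreal (y / 2) ltac:(lra)). intros b Hb. assert (Hb1 := proj1 (ball_R y (y / 2) b) Hb). clear Hb. rename Hb1 into Hb. simpl in Hb.
    apply Rabs_def2 in Hb.
    apply (RInt_correct (V := R_CompleteNormedModule)), (ex_RInt_continuous (V := R_CompleteNormedModule)).
    intros z Hz. apply Hg. apply (seg_pos c b z Hc ltac:(lra) Hz).
  - apply Hg, Hy.
Qed.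

Lemma uS_cont u : 0 < u -> continuous (fun u => u * Sser u) u.
Proof.
  intros Hu. apply (continuous_mult (K := R_AbsRing) (fun u => u) Sser).
  - apply continuous_id.
  - apply Sser_cont, Hu.
Qed.

Lemma Fint_eq c y : 0 < c -> 0 < y -> Fint c y = y * RInt Sser c y - RInt (fun u => u * Sser u) c y.
Proof.
  intros Hc Hy.
  assert (H1 : is_RInt Sser c y (RInt Sser c y)).
  { apply (RInt_correct (V := R_CompleteNormedModule)), (ex_RInt_continuous (V := R_CompleteNormedModule)).
    intros z Hz. apply Sser_cont. apply (seg_pos c y z Hc Hy Hz). }
  assert (H2 : is_RInt (fun u => u * Sser u) c y (RInt (fun u => u * Sser u) c y)).
  { apply (RInt_correct (V := R_CompleteNormedModule)), (ex_RInt_continuous (V := R_CompleteNormedModule)).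
    intros z Hz. apply uS_cont. apply (seg_pos c y z Hc Hy Hz). }
  assert (H3 := is_RInt_minus _ _ _ _ _ _ (is_RInt_scal _ _ _ y _ H1) H2).
  unfold Fint. apply (is_RInt_unique (V := R_CompleteNormedModule) (fun u => (y - u) * Sser u) c y).
  eapply is_RInt_ext; [|exact H3]. intros u _. cbv beta. toR. unfold minus, plus, opp, scal; simpl; unfold mult; simpl. ring.
Qed.

Lemma Fint_der c y : 0 < c -> 0 < y -> is_derive (Fint c) y (RInt Sser c y).
Proof.
  intros Hc Hy.
  apply (is_derive_ext_loc (fun y => y * RInt Sser c y - RInt (fun u => u * Sser u) c y)).
  - exists (mkposreal (y / 2) ltac:(lra)). intros b Hb. assert (Hb1 := proj1 (ball_R y (y / 2) b) Hb). clear Hb. rename Hb1 into Hb. simpl in Hb.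
    apply Rabs_def2 in Hb. symmetry. apply Fint_eq; lra.
  - assert (HA := RInt_der_gen Sser c y Hc Hy (fun u Hu => Sser_cont u Hu)).
    assert (HB := RInt_der_gen (fun u => u * Sser u) c y Hc Hy uS_cont).
    assert (HM := is_derive_mult (K := R_AbsRing) (fun y => y) (fun y => RInt Sser c y) y 1 (Sser y)
       ltac:(auto_derive; auto) HA (fun a b => Rmult_comm a b)).
    assert (HD := is_derive_minus _ _ _ _ _ HM HB).
    eapply is_derive_eq; [|exact HD].
    unfold minus, plus, opp, mult; simpl. ring.
Qed.

Definition Wn (x : R) (n : nat) : R :=
  (x * ln (INR (S n)) + ln (INR (Factorial.fact (S n))) - sum_f_R0 (fun k => ln (x + INR k)) (S n)) - PhiN 2 x (S n).

Lemma Wn_affine x n : Wn x n = Wn 2 n + (Wn 3 n - Wn 2 n) * (x - 2).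
Proof. unfold Wn. rewrite !PhiN_split. ring. Qed.

Lemma W_lim x : 1 < x -> is_lim_seq (Wn x) (ln (Gamma x) - Fint 2 x).
Proof.
  intros Hx. unfold Wn.
  apply (is_lim_seq_minus _ _ (ln (Gamma x)) (Fint 2 x) (ln (Gamma x) - Fint 2 x)).
  - apply lnGauss, Hx.
  - apply (is_lim_seq_incr_1 (PhiN 2 x)). apply Fint_lim; lra.
  - reflexivity.
Qed.

Definition Wv (x : R) : R := ln (Gamma x) - Fint 2 x.

Lemma W_affine x : 1 < x -> Wv x = Wv 2 + (Wv 3 - Wv 2) * (x - 2).
Proof.
  intros Hx.
  assert (H1 := W_lim x Hx).
  assert (H2 : is_lim_seq (fun n => Wn 2 n + (Wn 3 n - Wn 2 n) * (x - 2)) (Wv 2 + (Wv 3 - Wv 2) * (x - 2))).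
  { apply is_lim_seq_plus'; [apply W_lim; lra|].
    apply is_lim_seq_mult'; [|apply is_lim_seq_const].
    apply (is_lim_seq_minus _ _ (Wv 3) (Wv 2) (Wv 3 - Wv 2)); [apply W_lim; lra| apply W_lim; lra| reflexivity]. }
  eapply is_lim_seq_ext in H2; [|intros n; symmetry; apply Wn_affine].
  apply is_lim_seq_unique in H1. apply is_lim_seq_unique in H2.
  assert (E := eq_trans (eq_sym H1) H2). injection E. intros E'. unfold Wv. exact E'.
Qed.

Lemma lnGamma_loc y : 1 < y -> ln (Gamma y) = Fint 2 y + Wv 2 + (Wv 3 - Wv 2) * (y - 2).
Proof. intros Hy. pose proof (W_affine y Hy). unfold Wv in *. lra. Qed.

Lemma lnGamma_der y : 1 < y -> is_derive (fun y => ln (Gamma y)) y (RInt Sser 2 y + (Wv 3 - Wv 2)).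
Proof.
  intros Hy.
  apply (is_derive_ext_loc (fun y => Fint 2 y + Wv 2 + (Wv 3 - Wv 2) * (y - 2))).
  - exists (mkposreal (y - 1) ltac:(lra)). intros b Hb. assert (Hb1 := proj1 (ball_R y (y - 1) b) Hb).
    simpl in Hb1. apply Rabs_def2 in Hb1. symmetry. apply lnGamma_loc. lra.
  - assert (HF := Fint_der 2 y ltac:(lra) ltac:(lra)).
    assert (HL : is_derive (fun y => Wv 2 + (Wv 3 - Wv 2) * (y - 2)) y (Wv 3 - Wv 2)).
    { auto_derive; auto. ring. }
    assert (H := is_derive_plus _ _ _ _ _ HF HL).
    eapply is_derive_eq; [|eapply is_derive_ext; [|exact H]].
    + unfold plus; simpl. reflexivity.
    + intros t. cbv beta. unfold plus; simpl. ring.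
Qed.

Lemma trigamma_S x : 1 < x -> trigamma x = Sser x.
Proof.
  intros Hx. unfold trigamma. simpl Derive_n.
  rewrite (Derive_ext_loc _ (fun y => RInt Sser 2 y + (Wv 3 - Wv 2))).
  - apply is_derive_unique.
    assert (HA := RInt_der_gen Sser 2 x ltac:(lra) ltac:(lra) (fun u Hu => Sser_cont u Hu)).
    assert (HC : is_derive (fun _ : R => Wv 3 - Wv 2) x 0) by (auto_derive; auto).
    assert (H := is_derive_plus _ _ _ _ _ HA HC).
    eapply is_derive_eq; [|exact H]. unfold plus; simpl. ring.
  - exists (mkposreal (x - 1) ltac:(lra)). intros b Hb. assert (Hb1 := proj1 (ball_R x (x - 1) b) Hb).
    simpl in Hb1. apply Rabs_def2 in Hb1.
    apply is_derive_unique. apply lnGamma_der. lra.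
Qed.

Lemma Qs_SN m N : Qs m + SN (INR m + 1) N = Qs (m + N + 1).
Proof.
  induction N as [|N IH].
  - replace (m + 0 + 1)%nat with (S m) by lia. rewrite Qs_S. unfold SN. cbn [sum_f_R0].
    simpl (INR 0). rewrite Rplus_0_r. reflexivity.
  - rewrite SN_S. replace (m + S N + 1)%nat with (S (m + N + 1)) by lia. rewrite Qs_S, <- IH.
    replace (INR (m + N + 1) + 1) with (INR m + 1 + INR (S N)) by (rewrite !plus_INR, S_INR; simpl; ring).
    ring.
Qed.

Lemma Sser_int m : Sser (INR m + 1) = PI ^ 2 / 6 - Qs m.
Proof.
  assert (H1 : is_lim_seq (fun N => Qs m + SN (INR m + 1) N) (Qs m + Sser (INR m + 1))).
  { apply is_lim_seq_plus'; [apply is_lim_seq_const| apply SN_is; pose proof (pos_INR m); lra]. }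
  assert (H2 : is_lim_seq (fun N => Qs m + SN (INR m + 1) N) (PI ^ 2 / 6)).
  { apply (is_lim_seq_ext (fun N => Qs (N + S m))).
    - intros N. rewrite Qs_SN. f_equal. lia.
    - apply (is_lim_seq_incr_n Qs (S m)). apply basel. }
  apply is_lim_seq_unique in H1. apply is_lim_seq_unique in H2.
  assert (E := eq_trans (eq_sym H1) H2). injection E. intros E'. lra.
Qed.

Theorem mainTheorem8 (n : nat) (hn : (1 <= n)%nat) :
  sum_f_R0 (fun k : nat =>
      (-1) ^ (n + k) * ((2 * INR n + 1) * (2 * INR k + 1))
      / ((INR n - INR k) ^ 2 * (INR n + INR k + 1) ^ 2)) (n - 1)
  = - PI ^ 2 / 12 + trigamma (2 * INR n + 1) - / 2 * trigamma (INR n + 1).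
Proof.
  rewrite finite_part by exact hn.
  assert (Hn : 1 <= INR n) by (apply (le_INR 1); exact hn).
  rewrite !trigamma_S by lra.
  replace (2 * INR n + 1) with (INR (2 * n) + 1) by (rewrite mult_INR; reflexivity).
  rewrite !Sser_int. field.
Qed.
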